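(* Let $A\in\mathbb{R}^{m\times n}$, $b\in\mathbb{R}^m$ with $Ax=b$ consistent, and let $\{x^k\}_{k\ge0}$, $\{p_k\}_{k\ge0}$, $\{\delta_k\}$, $\{\eta_k^i\}$, $\{S_k\}$ be generated by the IS-Krylov algorithm described in the context, with $r^k=Ax^k-b$ and $j_k=\max\{k-\ell+1,0\}$. Then for any integers $t,v,k$ with $j_k\le t<v\le k$: (i) $\langle p_v,p_t\rangle=0$; (ii) $\langle S_t^\top r^v,S_t^\top r^t\rangle=0$ if $v=t+1$ or $j_k=j_t$, and otherwise $$\langle S_t^\top r^v,S_t^\top r^t\rangle=-\sum_{w=t}^{v-1}\sum_{i=j_t}^{j_k-1}\delta_w\eta_t^i\langle p_w,p_i\rangle.$$
   Context: IS-Krylov algorithm: given a probability space $(\Omega,\mathcal{F},\mathbf{P})$ of matrices in $\mathbb{R}^{m\times q}$, a positive integer $\ell$ and $x^0\in\operatorname{Range}(A^\top)$: draw $S_0\in\Omega$ (redrawing until $S_0^\top(Ax^0-b)\neq0$), set $p_0=d_0=-A^\top S_0S_0^\top(Ax^0-b)$; for $k=0,1,\dots$: $\delta_k=\|S_k^\top(Ax^k-b)\|_2^2/\|p_k\|_2^2$; $x^{k+1}=x^k+\delta_kp_k$; draw $S_{k+1}\in\Omega$ (redrawing until $S_{k+1}^\top(Ax^{k+1}-b)\neq0$); with $j_{k+1}=\max\{k-\ell+2,0\}$ set $d_{k+1}=-A^\top S_{k+1}S_{k+1}^\top(Ax^{k+1}-b)$, $\eta_{k+1}^i=\langle d_{k+1},p_i\rangle/\|p_i\|_2^2$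 for $i=j_{k+1},\dots,k$, and $p_{k+1}=d_{k+1}-\sum_{i=j_{k+1}}^k\eta_{k+1}^ip_i$. Empty sums are zero. *)

(* Defs.v *)
From mathcomp Require Import all_boot all_order all_algebra.
From mathcomp Require Import reals.
Set Implicit Arguments. Unset Strict Implicit. Unset Printing Implicit Defensive.
Import Order.TTheory GRing.Theory Num.Theory.
Local Open Scope ring_scope.

Definition ip (R : realType) (p : nat) (u v : 'cV[R]_p) : R :=
  \sum_(i < p) u i ord0 * v i ord0.

Section ISKrylov.
Variables (R : realType) (m n q : nat).
Variables (A : 'M[R]_(m, n)) (b : 'cV[R]_m) (SS : nat -> 'M[R]_(m, q)).
Variables (ell : nat) (x0 : 'cV[R]_n).

Definition iskdir (Sk : 'M[R]_(m, q)) (x : 'cV[R]_n) : 'cV[R]_n :=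
  - (A^T *m (Sk *m (Sk^T *m (A *m x - b)))).

(* State after step k: (x^k, [:: p_0; ...; p_k]). *)
Fixpoint isk_state (k : nat) : 'cV[R]_n * seq 'cV[R]_n :=
  match k with
  | 0 => (x0, [:: iskdir (SS 0) x0])
  | k'.+1 =>
      let st := isk_state k' in
      let x := st.1 in
      let ps := st.2 in
      let pk := nth 0 ps k' in
      let rk := (SS k')^T *m (A *m x - b) in
      let delta := ip rk rk / ip pk pk in
      let x' := x + delta *: pk in
      let d := iskdir (SS k) x' in
      let j := (k'.+2 - ell)%N in
      let p' := d - \sum_(j <= i < k) (ip d (nth 0 ps i) / ip (nth 0 ps i) (nth 0 ps i))
                                     *: nth 0 ps i in
      (x', rcons ps p')
  end.

Definition isk_x (k : nat) : 'cV[R]_n := (isk_state k).1.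
Definition isk_p (k : nat) : 'cV[R]_n := nth 0 (isk_state k).2 k.
Definition isk_r (k : nat) : 'cV[R]_m := A *m isk_x k - b.
Definition isk_delta (k : nat) : R :=
  ip ((SS k)^T *m isk_r k) ((SS k)^T *m isk_r k) / ip (isk_p k) (isk_p k).
Definition isk_eta (k i : nat) : R :=
  ip (iskdir (SS k) (isk_x k)) (isk_p i) / ip (isk_p i) (isk_p i).
(* j_k = max{k - ell + 1, 0} *)
Definition isk_j (k : nat) : nat := (k.+1 - ell)%N.

End ISKrylov.

(* Main.v *)
Require Import Defs.
From mathcomp Require Import all_boot all_order all_algebra.
From mathcomp Require Import reals.
From mathcomp Require Import ring lra zify.
Set Implicit Arguments. Unset Strict Implicit.
Import Order.TTheory GRing.Theory Num.Theory.
Local Open Scope ring_scope.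

Lemma ipC (R : realType) p (u v : 'cV[R]_p) : ip u v = ip v u.
Proof. by apply: eq_bigr => i _; rewrite mulrC. Qed.

Lemma ipDl (R : realType) p (u w v : 'cV[R]_p) : ip (u + w) v = ip u v + ip w v.
Proof. by rewrite /ip -big_split; apply: eq_bigr => i _; rewrite mxE mulrDl. Qed.

Lemma ipNl (R : realType) p (u v : 'cV[R]_p) : ip (- u) v = - ip u v.
Proof. by rewrite /ip -sumrN; apply: eq_bigr => i _; rewrite mxE mulNr. Qed.

Lemma ipBl (R : realType) p (u w v : 'cV[R]_p) : ip (u - w) v = ip u v - ip w v.
Proof. by rewrite ipDl ipNl. Qed.

Lemma ipZl (R : realType) p a (u v : 'cV[R]_p) : ip (a *: u) v = a * ip u v.
Proof. by rewrite /ip mulr_sumr; apply: eq_bigr => i _; rewrite mxE mulrA. Qed.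

Lemma ip0l (R : realType) p (v : 'cV[R]_p) : ip 0 v = 0.
Proof. by rewrite /ip big1 // => i _; rewrite mxE mul0r. Qed.

Lemma ipDr (R : realType) p (u w v : 'cV[R]_p) : ip v (u + w) = ip v u + ip v w.
Proof. by rewrite ipC ipDl !(ipC v). Qed.
Lemma ipNr (R : realType) p (u v : 'cV[R]_p) : ip v (- u) = - ip v u.
Proof. by rewrite ipC ipNl ipC. Qed.
Lemma ipBr (R : realType) p (u w v : 'cV[R]_p) : ip v (u - w) = ip v u - ip v w.
Proof. by rewrite ipDr ipNr. Qed.
Lemma ipZr (R : realType) p a (u v : 'cV[R]_p) : ip v (a *: u) = a * ip v u.
Proof. by rewrite ipC ipZl ipC. Qed.

Lemma ip_suml (R : realType) p (I : Type) (r : seq I) (P : pred I) (F : I -> 'cV[R]_p) v :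
  ip (\sum_(i <- r | P i) F i) v = \sum_(i <- r | P i) ip (F i) v.
Proof.
elim/big_rec2: _ => [|i y1 y2 _ <-]; first by rewrite ip0l.
by rewrite ipDl.
Qed.

Lemma ip_sumr (R : realType) p (I : Type) (r : seq I) (P : pred I) (F : I -> 'cV[R]_p) v :
  ip v (\sum_(i <- r | P i) F i) = \sum_(i <- r | P i) ip v (F i).
Proof. by rewrite ipC ip_suml; apply: eq_bigr => i _; rewrite ipC. Qed.

Lemma ip_mulmx (R : realType) p r (M : 'M[R]_(p, r)) (u : 'cV[R]_r) (v : 'cV[R]_p) :
  ip (M *m u) v = ip u (M^T *m v).
Proof.
rewrite /ip.
transitivity (\sum_(i < p) \sum_(j < r) M i j * u j ord0 * v i ord0).
  by apply: eq_bigr => i _; rewrite mxE big_distrl.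
rewrite exchange_big /=; apply: eq_bigr => j _.
rewrite mxE big_distrr /=; apply: eq_bigr => i _.
by rewrite mxE mulrCA mulrA.
Qed.

Lemma ip_ge0 (R : realType) p (u : 'cV[R]_p) : 0 <= ip u u.
Proof. by rewrite /ip sumr_ge0 // => i _; rewrite -expr2 sqr_ge0. Qed.

Lemma ip_eq0 (R : realType) p (u : 'cV[R]_p) : ip u u = 0 -> u = 0.
Proof.
move=> /eqP; rewrite /ip psumr_eq0 => [/allP H|i _]; last by rewrite -expr2 sqr_ge0.
apply/matrixP => i j; rewrite (ord1 j) mxE.
have := H i (mem_index_enum _); rewrite mulf_eq0 orbb => /eqP //.
Qed.

Lemma isk_size (R : realType) m n q (A : 'M[R]_(m, n)) b (SS : nat -> 'M[R]_(m, q)) ell x0 k :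
  size (isk_state A b SS ell x0 k).2 = k.+1.
Proof. by elim: k => [//|k IH] /=; rewrite size_rcons IH. Qed.

Lemma isk_nth (R : realType) m n q (A : 'M[R]_(m, n)) b (SS : nat -> 'M[R]_(m, q)) ell x0 k i :
  (i <= k)%N -> nth 0 (isk_state A b SS ell x0 k).2 i = isk_p A b SS ell x0 i.
Proof.
elim: k => [|k IH]; first by rewrite leqn0 => /eqP ->.
rewrite leq_eqVlt => /orP [/eqP ->|Hi] //.
by rewrite /= nth_rcons isk_size Hi IH.
Qed.

Lemma isk_x_succ (R : realType) m n q (A : 'M[R]_(m, n)) b (SS : nat -> 'M[R]_(m, q)) ell x0 k :
  isk_x A b SS ell x0 k.+1 = isk_x A b SS ell x0 k + isk_delta A b SS ell x0 k *: isk_p A b SS ell x0 k.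
Proof. by []. Qed.

Lemma isk_p_eq (R : realType) m n q (A : 'M[R]_(m, n)) b (SS : nat -> 'M[R]_(m, q)) ell x0 k :
  isk_p A b SS ell x0 k = iskdir A b (SS k) (isk_x A b SS ell x0 k)
    - \sum_(isk_j ell k <= i < k) isk_eta A b SS ell x0 k i *: isk_p A b SS ell x0 i.
Proof.
case: k => [|k]; first by rewrite big_geq // subr0.
rewrite {1}/isk_p /= nth_rcons isk_size ltnn eqxx.
congr (_ - _).
rewrite big_nat_cond [RHS]big_nat_cond; apply: eq_bigr => i /andP [/andP [_ Hi] _].
by rewrite !isk_nth.
Qed.

Lemma sum0_nat (R : realType) p lo hi (F : nat -> 'cV[R]_p) :
  (forall i, (lo <= i < hi)%N -> F i = 0) -> \sum_(lo <= i < hi) F i = 0.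
Proof. by move=> HF; rewrite big_nat_cond big1 // => i /andP [H _]; apply: HF. Qed.

Lemma sum0_natR (R : realType) lo hi (F : nat -> R) :
  (forall i, (lo <= i < hi)%N -> F i = 0) -> \sum_(lo <= i < hi) F i = 0.
Proof. by move=> HF; rewrite big_nat_cond big1 // => i /andP [H _]; apply: HF. Qed.

Lemma sum_single (R : realType) lo hi a (F : nat -> R) :
  (lo <= a < hi)%N -> (forall i, (lo <= i < hi)%N -> i != a -> F i = 0) ->
  \sum_(lo <= i < hi) F i = F a.
Proof.
move=> /andP [H1 H2] HF.
rewrite (big_cat_nat H1 (ltnW H2)) /= sum0_natR ?add0r; last first.
  by move=> i /andP [Hi1 Hi2]; apply: HF; lia.
rewrite big_ltn // sum0_natR ?addr0 // => i /andP [Hi1 Hi2]; apply: HF; lia.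
Qed.

Lemma ip_dir (R : realType) m n q (A : 'M[R]_(m, n)) b (S : 'M[R]_(m, q)) x z :
  ip (iskdir A b S x) z = - ip (S^T *m (A *m x - b)) (S^T *m (A *m z)).
Proof. by rewrite /iskdir ipNl ip_mulmx trmxK ip_mulmx. Qed.

Lemma isk_main (R : realType) m n q (A : 'M[R]_(m, n)) b (SS : nat -> 'M[R]_(m, q)) ell x0
  (xs : 'cV[R]_n) (K : nat) :
  A *m xs = b ->
  (forall k, (k <= K)%N -> (SS k)^T *m isk_r A b SS ell x0 k != 0) ->
  forall c, (c <= K)%N ->
   [/\ ip (isk_p A b SS ell x0 c) (isk_p A b SS ell x0 c) != 0,
       ip (isk_p A b SS ell x0 c) (isk_x A b SS ell x0 c - xs) =
         - ip ((SS c)^T *m isk_r A b SS ell x0 c) ((SS c)^T *m isk_r A b SS ell x0 c)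
     & forall a, (isk_j ell c <= a < c)%N ->
         ip (isk_p A b SS ell x0 c) (isk_p A b SS ell x0 a) = 0].
Proof.
move=> Hxs Hnz c; elim/ltn_ind: c => c IH Hc.
set p := isk_p A b SS ell x0.
set x := isk_x A b SS ell x0.
have IHc : forall a, (a < c)%N -> _ := fun a Ha => IH a Ha (leq_trans (ltnW Ha) Hc).
have orth : forall a, (isk_j ell c <= a < c)%N -> ip (p c) (p a) = 0.
  move=> a Ha.
  rewrite {1}/p isk_p_eq ipBl ip_suml (@sum_single _ _ _ a) //.
    have [Hpa _ _] := IHc a (proj2 (andP Ha)).
    by rewrite ipZl /isk_eta divfK // subrr.
  move=> i Hi Hia; rewrite ipZl.
  case: (ltngtP i a) => [Hlt|Hgt|Heq]; last by rewrite Heq eqxx in Hia.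
    have [_ _ Ho] := IHc a (proj2 (andP Ha)).
    by rewrite ipC Ho ?mulr0 //; move: Ha Hi Hlt; rewrite /isk_j; lia.
  have [_ _ Ho] := IHc i (proj2 (andP Hi)).
  by rewrite Ho ?mulr0 //; move: Ha Hi Hgt; rewrite /isk_j; lia.
have xo : forall i, (isk_j ell c <= i < c)%N -> ip (p i) (x c - xs) = 0.
  move=> i Hi.
  have Hic : (i < c)%N by case/andP: Hi.
  suff H : forall e, (i + e.+1 <= c)%N -> ip (p i) (x (i + e.+1)%N - xs) = 0.
    have := H (c - i.+1)%N; have -> : (i + (c - i.+1).+1 = c)%N by lia.
    by apply; lia.
  elim=> [|e IHe] He.
    have [Hpi Hxi _] := IHc i Hic.
    rewrite addn1 /x isk_x_succ addrAC ipDr ipZr Hxi /isk_delta divfK //.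
    by rewrite addNr.
  rewrite addnS /x isk_x_succ addrAC ipDr ipZr.
  rewrite /x in IHe; rewrite IHe; last by lia.
  have [_ _ Ho] := IHc (i + e.+1)%N ltac:(lia).
  by rewrite ipC Ho ?mulr0 ?addr0 //; move: Hi He; rewrite /isk_j; lia.
have xc : ip (p c) (x c - xs) =
    - ip ((SS c)^T *m isk_r A b SS ell x0 c) ((SS c)^T *m isk_r A b SS ell x0 c).
  rewrite {1}/p isk_p_eq ipBl ip_suml sum0_natR ?subr0; last first.
    by move=> i Hi; rewrite ipZl xo ?mulr0.
  by rewrite ip_dir (mulmxBr A) Hxs.
split => //.
apply/eqP => /ip_eq0 Hp0.
move: xc; rewrite Hp0 ip0l => /esym /eqP; rewrite oppr_eq0 => /eqP /ip_eq0 Hs0.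
by move: (Hnz c Hc); rewrite Hs0 eqxx.
Qed.
Unset Implicit Arguments.

Theorem proposition4p4 (R : realType) (m n q : nat)
  (A : 'M[R]_(m, n)) (b : 'cV[R]_m) (SS : nat -> 'M[R]_(m, q))
  (ell : nat) (x0 : 'cV[R]_n) (K : nat) :
  (0 < ell)%N ->
  (exists x : 'cV[R]_n, A *m x = b) ->
  (exists y : 'cV[R]_m, x0 = A^T *m y) ->
  (forall k, (k <= K)%N -> (SS k)^T *m isk_r A b SS ell x0 k != 0) ->
  forall t v k : nat, (k <= K)%N ->
    (isk_j ell k <= t)%N -> (t < v)%N -> (v <= k)%N ->
    ip (isk_p A b SS ell x0 v) (isk_p A b SS ell x0 t) = 0
    /\ ((v = t.+1 \/ isk_j ell k = isk_j ell t) ->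
        ip ((SS t)^T *m isk_r A b SS ell x0 v) ((SS t)^T *m isk_r A b SS ell x0 t) = 0)
    /\ (~ (v = t.+1 \/ isk_j ell k = isk_j ell t) ->
        ip ((SS t)^T *m isk_r A b SS ell x0 v) ((SS t)^T *m isk_r A b SS ell x0 t) =
        - \sum_(t <= w < v) \sum_(isk_j ell t <= i < isk_j ell k)
            isk_delta A b SS ell x0 w * isk_eta A b SS ell x0 t i
            * ip (isk_p A b SS ell x0 w) (isk_p A b SS ell x0 i)).
Proof.
move=> Hell [xs Hxs] _ Hnz t v k Hk Hjt Htv Hvk.
have M := isk_main Hxs Hnz.
set p := isk_p A b SS ell x0.
set x := isk_x A b SS ell x0.
set dl := isk_delta A b SS ell x0.
set et := isk_eta A b SS ell x0.
have orth : forall c a, (c <= K)%N -> (isk_j ell c <= a < c)%N -> ip (p c) (p a) = 0.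
  by move=> c a Hc Ha; have [_ _ Ho] := M c Hc; apply: Ho.
have jmono : forall a c, (a <= c)%N -> (isk_j ell a <= isk_j ell c)%N.
  by move=> a c Hac; rewrite /isk_j; lia.
have Hjk := jmono _ _ Hvk.
have Hjtk := jmono _ _ (leq_trans (ltnW Htv) Hvk).
set s := (SS t)^T *m isk_r A b SS ell x0 t.
have hr : forall e, (SS t)^T *m (A *m x (t + e)%N - b) =
    s + \sum_(t <= w < (t + e)%N) dl w *: ((SS t)^T *m (A *m p w)).
  elim=> [|e IHe]; first by rewrite addn0 big_geq // addr0.
  rewrite addnS big_nat_recr /=; last by rewrite leq_addr.
  have -> : A *m x (t + e).+1 - b = (A *m x (t + e)%N - b) + dl (t + e)%N *: (A *m p (t + e)%N).
    by rewrite /x isk_x_succ mulmxDr scalemxAr addrAC.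
  by rewrite mulmxDr IHe -scalemxAr addrA.
have hd : iskdir A b (SS t) (x t) = p t + \sum_(isk_j ell t <= i < t) et t i *: p i.
  by rewrite /p (isk_p_eq A b SS ell x0 t) subrK.
have per : forall w, (t <= w < v)%N ->
    dl w * ip ((SS t)^T *m (A *m p w)) s =
    - (dl w * ip (p t) (p w)) - \sum_(isk_j ell t <= i < isk_j ell k) dl w * et t i * ip (p w) (p i).
  move=> w Hw.
  have -> : ip ((SS t)^T *m (A *m p w)) s = - ip (iskdir A b (SS t) (x t)) (p w).
    by rewrite ip_dir opprK ipC.
  rewrite hd ipDl ip_suml (big_cat_nat Hjtk Hjt) /= [X in _ + (_ + X)]sum0_natR ?addr0.
    rewrite mulrN mulrDr opprD; congr (_ - _); rewrite mulr_sumr; apply: eq_bigr => i _.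
    by rewrite ipZl ipC mulrA.
  move=> i Hi; rewrite ipZl ipC orth ?mulr0 //; last by move: Hi Hw Hjk; rewrite /isk_j; lia.
  by apply: leq_trans Hk; lia.
have G : ip ((SS t)^T *m isk_r A b SS ell x0 v) s =
    - \sum_(t <= w < v) \sum_(isk_j ell t <= i < isk_j ell k) dl w * et t i * ip (p w) (p i).
  have Hv : v = (t + (v - t))%N by lia.
  rewrite /isk_r -/x Hv hr -Hv ipDl ip_suml.
  under eq_big_nat => w Hw do rewrite ipZl per //.
  rewrite big_split /= sumrN (@sum_single _ _ _ t); last 2 first.
  - by rewrite leqnn Htv.
  - move=> w Hw Hwt; rewrite ipC orth ?mulr0 ?oppr0 //; first by apply: leq_trans Hk; lia.
    by move: Hw Hwt Hjt Hvk; rewrite /isk_j; lia.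
  have [Hpt _ _] := M t ltac:(lia).
  have -> : dl t * ip (p t) (p t) = ip s s by rewrite /dl /isk_delta divfK.
  by rewrite addrA addrN add0r sumrN.
split; first by apply: orth; [lia | move: Hjk Hjt Htv; rewrite /isk_j; lia].
split; last by move=> _; exact: G.
move=> Hcase; rewrite G sum0_natR ?oppr0 // => w Hw.
rewrite sum0_natR // => i Hi.
case: Hcase => [Hv1|Hjj]; last by move: Hi; rewrite Hjj; lia.
have -> : w = t by lia.
rewrite orth ?mulr0 //; first by lia.
by move: Hi Hjt; rewrite /isk_j; lia.
Qed.
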